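(* Let $H$ be a complex Hilbert space and let $T$ be a densely defined closed operator in $H$ with $D(T)\subset D(T^* )$, and write $T=A+iB$ where $A=\frac{T+T^*}{2}$ and $B=\frac{T-T^*}{2i}$ (both defined on $D(T)$). Assume that $A$ is positive or $B$ is positive. If $T$ is nilpotent, i.e. there is $n\in\mathbb{N}$ such that $T^n$ is well defined with $D(T^n)=D(T)$ and $T^nx=0$ for all $x\in D(T)$, then $T\in B(H)$, $T$ is normal, and $T=0$ everywhere on $H$.
   Context: Products of unbounded operators are taken on natural domains: $D(ST)=\{x\in D(T): Tx\in D(S)\}$; sums on $D(S+T)=D(S)\cap D(T)$. A symmetric operator $S$ (densely defined with $S\subset S^*$) is positive if $\langle Sx,x\rangle\geq 0$ for all $x\in D(S)$. $B(H)$ is the algebra of everywhere defined bounded operators on $H$. *)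

(* Defs.v *)
(* A complex Hilbert space is an lmodType over R[i]
   with an inner product (linear in the first argument) complete for the
   induced norm. *)
From HB Require Import structures.
From mathcomp Require Import all_boot all_order all_algebra.
From mathcomp Require Import complex.
From mathcomp Require Import reals.
From Stdlib Require Import ClassicalEpsilon.

Set Implicit Arguments.
Unset Strict Implicit.
Unset Printing Implicit Defensive.

Import Order.TTheory GRing.Theory Num.Theory.
Local Open Scope ring_scope.

Section Hilbert.
Variable R : realType.
Variable V : lmodType R[i].
Variable ip : V -> V -> R[i].

(* inner product axioms: linear in the first variable, conjugate symmetric,
   positive definite (0 <= z in R[i] means z is a nonnegative real) *)
Definition is_inner_product : Prop :=
  [/\ (forall (a : R[i]) (x y z : V), ip (a *: x + y) z = a * ip x z + ip y z),
      (forall x y : V, ip y x = Num.conj (ip x y)),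
      (forall x : V, 0 <= ip x x) &
      (forall x : V, ip x x = 0 -> x = 0)].

Definition hnorm (x : V) : R := Num.sqrt (complex.Re (ip x x)).

Definition hcauchy (u : nat -> V) : Prop :=
  forall e : R, 0 < e -> exists N : nat, forall m n : nat,
    (N <= m)%N -> (N <= n)%N -> hnorm (u m - u n) < e.

Definition hconverges (u : nat -> V) (l : V) : Prop :=
  forall e : R, 0 < e -> exists N : nat, forall n : nat,
    (N <= n)%N -> hnorm (u n - l) < e.

Definition hcomplete : Prop :=
  forall u : nat -> V, hcauchy u -> exists l : V, hconverges u l.

Definition is_hilbert : Prop := is_inner_product /\ hcomplete.

Record op := Op { dom : V -> Prop; app : V -> V }.

Definition is_linear_op (T : op) : Prop :=
  [/\ dom T 0,
      (forall (a : R[i]) x y, dom T x -> dom T y -> dom T (a *: x + y)) &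
      (forall (a : R[i]) x y, dom T x -> dom T y ->
          app T (a *: x + y) = a *: app T x + app T y)].

Definition densely_defined (T : op) : Prop :=
  forall (x : V) (e : R), 0 < e -> exists y : V, dom T y /\ hnorm (x - y) < e.

Definition closed_op (T : op) : Prop :=
  forall (u : nat -> V) (x y : V), (forall n, dom T (u n)) ->
    hconverges u x -> hconverges (fun n => app T (u n)) y ->
    dom T x /\ app T x = y.

(* adjoint: D(T* ) = {y | exists z, forall x in D(T), <Tx,y> = <x,z>},
   T* y = that z (unique when T is densely defined; chosen by epsilon) *)
Definition adj_rel (T : op) (y z : V) : Prop :=
  forall x, dom T x -> ip (app T x) y = ip x z.

Definition adjoint (T : op) : op :=
  Op (fun y => exists z, adj_rel T y z)
     (fun y => epsilon (inhabits 0) (adj_rel T y)).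

Definition opcomp (S T : op) : op :=
  Op (fun x => dom T x /\ dom S (app T x)) (fun x => app S (app T x)).

Definition opadd (S T : op) : op :=
  Op (fun x => dom S x /\ dom T x) (fun x => app S x + app T x).

Definition opscale (a : R[i]) (T : op) : op :=
  Op (dom T) (fun x => a *: app T x).

Definition opid : op := Op (fun _ => True) (fun x => x).

Fixpoint oppow (T : op) (n : nat) : op :=
  match n with 0 => opid | n.+1 => opcomp T (oppow T n) end.

Definition op_eq (S T : op) : Prop :=
  (forall x, dom S x <-> dom T x) /\ (forall x, dom S x -> app S x = app T x).

Definition op_sub (S T : op) : Prop :=
  (forall x, dom S x -> dom T x) /\ (forall x, dom S x -> app S x = app T x).

Definition re_part (T : op) : op :=
  opscale (2%:R)^-1 (opadd T (adjoint T)).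
Definition im_part (T : op) : op :=
  opscale (2%:R * 'i%C)^-1 (opadd T (opscale (-1) (adjoint T))).

Definition symmetric_op (S : op) : Prop :=
  densely_defined S /\ op_sub S (adjoint S).
Definition positive_op (S : op) : Prop :=
  symmetric_op S /\ forall x, dom S x -> 0 <= ip (app S x) x.

Definition in_BH (T : op) : Prop :=
  (forall x, dom T x) /\
  exists M : R, forall x, hnorm (app T x) <= M * hnorm x.

Definition normal_op (T : op) : Prop :=
  op_eq (opcomp T (adjoint T)) (opcomp (adjoint T) T).

End Hilbert.

(* Main.v *)
Require Import Defs.
From HB Require Import structures.
From mathcomp Require Import all_boot all_order all_algebra.
From mathcomp Require Import complex.
From mathcomp Require Import reals.
From Stdlib Require Import ClassicalEpsilon.
From mathcomp Require Import lra zify.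

Import Order.TTheory GRing.Theory Num.Theory.
Local Open Scope ring_scope.

Lemma conjE (R : realType) (z : R[i]) : Num.conj z = conjc z.
Proof. by []. Qed.

Lemma ip0l {R : realType} {V : lmodType R[i]} {ip : V -> V -> R[i]}
  (IP : is_inner_product ip) z : ip 0 z = 0.
Proof.
case: IP => H1 _ _ _.
have := H1 1 0 0 z; rewrite scale1r addr0 mul1r => E.
by apply: (addrI (ip 0 z)); rewrite addr0 -E.
Qed.

Lemma ipZl {R : realType} {V : lmodType R[i]} {ip : V -> V -> R[i]}
  (IP : is_inner_product ip) a x z : ip (a *: x) z = a * ip x z.
Proof.
have := ip0l IP z; case: IP => H1 _ _ _ H0.
by have := H1 a x 0 z; rewrite addr0 H0 addr0.
Qed.

Lemma ipDl {R : realType} {V : lmodType R[i]} {ip : V -> V -> R[i]}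
  (IP : is_inner_product ip) x y z : ip (x + y) z = ip x z + ip y z.
Proof.
case: IP => H1 _ _ _.
by have := H1 1 x y z; rewrite scale1r mul1r.
Qed.

Lemma ipZr {R : realType} {V : lmodType R[i]} {ip : V -> V -> R[i]}
  (IP : is_inner_product ip) a x z : ip z (a *: x) = conjc a * ip z x.
Proof.
have HZ := ipZl IP; case: IP => _ H2 _ _.
by rewrite H2 HZ !conjE rmorphM [ip z x]H2.
Qed.

Lemma ipDr {R : realType} {V : lmodType R[i]} {ip : V -> V -> R[i]}
  (IP : is_inner_product ip) x y z : ip z (x + y) = ip z x + ip z y.
Proof.
have HD := ipDl IP; case: IP => _ H2 _ _.
by rewrite H2 HD !conjE rmorphD [ip z x]H2 [ip z y]H2.
Qed.

Lemma ip0r {R : realType} {V : lmodType R[i]} {ip : V -> V -> R[i]}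
  (IP : is_inner_product ip) z : ip z 0 = 0.
Proof.
case: (IP) => _ H2 _ _.
by rewrite H2 (ip0l IP) conjE rmorph0.
Qed.

Lemma hnormN {R : realType} {V : lmodType R[i]} {ip : V -> V -> R[i]}
  (IP : is_inner_product ip) x : hnorm ip (- x) = hnorm ip x.
Proof.
rewrite /hnorm -scaleN1r (ipZl IP) (ipZr IP) mulrA.
have -> : (-1 : R[i]) * conjc (-1) = 1 by rewrite -conjE rmorphN1 mulrNN mulr1.
by rewrite mul1r.
Qed.

Lemma hnorm0 {R : realType} {V : lmodType R[i]} {ip : V -> V -> R[i]}
  (IP : is_inner_product ip) : hnorm ip 0 = 0.
Proof. by rewrite /hnorm (ip0l IP) /= sqrtr0. Qed.

Lemma T0 {R : realType} {V : lmodType R[i]} {T : op V} (L : is_linear_op T) :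
  app T 0 = 0.
Proof.
case: L => D0 _ H3; have := H3 (-1) 0 0 D0 D0.
by rewrite scaler0 addr0 scaleN1r addNr.
Qed.

Lemma TZ {R : realType} {V : lmodType R[i]} {T : op V} (L : is_linear_op T) b {u} :
  dom T u -> dom T (b *: u) /\ app T (b *: u) = b *: app T u.
Proof.
move=> Du; have := T0 L; case: L => D0 H2 H3 E0.
have := H3 b u 0 Du D0; have := H2 b u 0 Du D0.
by rewrite addr0 E0 addr0.
Qed.

Lemma TD {R : realType} {V : lmodType R[i]} {T : op V} (L : is_linear_op T) {u v} :
  dom T u -> dom T v -> dom T (u + v) /\ app T (u + v) = app T u + app T v.
Proof.
move=> Du Dv; case: L => D0 H2 H3.
have := H3 1 u v Du Dv; have := H2 1 u v Du Dv.
by rewrite !scale1r.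
Qed.

Lemma ident {R : realType} {V : lmodType R[i]} {ip : V -> V -> R[i]}
  (IP : is_inner_product ip) {T : op V} (L : is_linear_op T) x a b :
  dom T x -> dom T (app T x) -> app T (app T x) = 0 ->
  dom T (a *: x + b *: app T x) /\
  ip (app T (a *: x + b *: app T x)) (a *: x + b *: app T x) =
  a * conjc a * ip (app T x) x + a * conjc b * ip (app T x) (app T x).
Proof.
move=> Dx DTx TTx.
have [D1 E1] := TZ L a Dx.
have [D2 E2] := TZ L b DTx.
have [D3 E3] := TD L D1 D2.
split => //.
rewrite E3 E1 E2 TTx scaler0 addr0 (ipZl IP) (ipDr IP) !(ipZr IP).
by rewrite mulrDr !mulrA.
Qed.

Lemma key {R : realType} {V : lmodType R[i]} {ip : V -> V -> R[i]}
  (IP : is_inner_product ip) {T : op V} (L : is_linear_op T) (c : R[i])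
  (Hc : c = 1 \/ c = (- 'i)%C)
  (P : forall w, dom T w -> 0 <= complex.Re (c * ip (app T w) w)) x :
  dom T x -> dom T (app T x) -> app T (app T x) = 0 -> app T x = 0.
Proof.
move=> Dx DTx TTx.
have Px := P x Dx.
case: (IP) => _ _ H3 H4.
have Hq := H3 (app T x).
apply: H4.
have Hid := fun a b => ident IP L x a b Dx DTx TTx.
move: Hid Hq Px.
move Eq: (ip (app T x) (app T x)) => q.
move Ez: (ip (app T x) x) => z.
case: q Eq => q1 q2 Eq; case: z Ez => z1 z2 Ez Hid Hq Px.
case: Hc => Ec; rewrite Ec in Px P.
- have [Dw Ew] := Hid (q1%:C)%C ((- (z1 + 1))%:C)%C.
  have := P _ Dw; rewrite Ew.
  move: Px Hq; simpc; rewrite /= => Px /andP[/eqP -> Hq1] H.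
  have -> : q1 = 0 by nra.
  by [].
- have [Dw Ew] := Hid (q1%:C)%C (Complex 0 (z2 + 1)).
  have := P _ Dw; rewrite Ew.
  move: Px Hq; simpc; rewrite /= => Px /andP[/eqP -> Hq1] H.
  have -> : q1 = 0 by nra.
  by [].
Qed.

Lemma adj_ip {R : realType} {V : lmodType R[i]} {ip : V -> V -> R[i]}
  (IP : is_inner_product ip) {T : op V} {w} :
  dom T w -> dom (adjoint ip T) w ->
  ip (app (adjoint ip T) w) w = conjc (ip (app T w) w).
Proof.
move=> Dw DAw.
have As : adj_rel ip T w (app (adjoint ip T) w) := epsilon_spec (inhabits 0) _ DAw.
case: (IP) => _ H2 _ _.
by rewrite H2 -As.
Qed.

Lemma posA {R : realType} {V : lmodType R[i]} {ip : V -> V -> R[i]}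
  (IP : is_inner_product ip) {T : op V}
  (Tdom : forall x, dom T x -> dom (adjoint ip T) x) :
  positive_op ip (re_part ip T) ->
  forall w, dom T w -> 0 <= complex.Re (1 * ip (app T w) w).
Proof.
case=> _ Hp w Dw.
have := Hp w (conj Dw (Tdom w Dw)).
rewrite /= (ipZl IP) (ipDl IP) (adj_ip IP Dw (Tdom w Dw)).
case: (ip (app T w) w) => z1 z2 H.
have H2 : 0 <= (2%:R : R[i]) * ((2%:R)^-1 * ((z1 +i* z2)%C + ((z1 +i* z2)%C)^*%C)).
  by apply: mulr_ge0 => //; rewrite ler0n.
move: H2; rewrite mulrA mulfV ?pnatr_eq0 // mul1r; simpc.
rewrite /= => H3; lra.
Qed.

Lemma posB {R : realType} {V : lmodType R[i]} {ip : V -> V -> R[i]}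
  (IP : is_inner_product ip) {T : op V}
  (Tdom : forall x, dom T x -> dom (adjoint ip T) x) :
  positive_op ip (im_part ip T) ->
  forall w, dom T w -> 0 <= complex.Re ((- 'i)%C * ip (app T w) w).
Proof.
case=> _ Hp w Dw.
have := Hp w (conj Dw (Tdom w Dw)).
rewrite /= (ipZl IP) (ipDl IP) (ipZl IP) (adj_ip IP Dw (Tdom w Dw)).
case: (ip (app T w) w) => z1 z2.
move Ey: (_ * _) => y Hy.
have E : (2%:R * 'i)%C * y = (z1 +i* z2)%C + (-1) * ((z1 +i* z2)%C)^*%C.
  by rewrite -Ey mulrA mulfV ?mul1r // mulf_neq0 ?pnatr_eq0 // eq_complex /= oner_eq0 andbF.
move: E Hy; case: y {Ey} => y1 y2.
have -> : (2%:R : R[i]) = (2%:R)%:C%C by rewrite rmorph_nat.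
simpc; rewrite /= => /eqP; rewrite eq_complex /= => /andP[_ /eqP E] /andP[_ Hy].
lra.
Qed.

Lemma app_pow {R : realType} {V : lmodType R[i]} (T : op V) n x :
  app (oppow T n) x = iter n (app T) x.
Proof. by elim: n => //= n ->. Qed.

Lemma dom_pow {R : realType} {V : lmodType R[i]} (T : op V) k x :
  dom (oppow T k) x -> forall j, (j < k)%N -> dom T (iter j (app T) x).
Proof.
elim: k => [//|k IH] /= [Dk DT] j.
rewrite ltnS leq_eqVlt => /orP[/eqP->|]; first by rewrite -app_pow.
exact: IH.
Qed.

Lemma zeroT {R : realType} {V : lmodType R[i]} {ip : V -> V -> R[i]}
  (IP : is_inner_product ip) {T : op V} (L : is_linear_op T) (c : R[i])
  (Hc : c = 1 \/ c = (- 'i)%C)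
  (P : forall w, dom T w -> 0 <= complex.Re (c * ip (app T w) w))
  (Hnil : exists n : nat,
      (forall x, dom (oppow T n) x <-> dom T x) /\
      (forall x, dom T x -> app (oppow T n) x = 0)) :
  forall x, dom T x -> app T x = 0.
Proof.
case: Hnil => n [Hd Hz].
case: n Hd Hz => [|m] Hd Hz.
  move=> x Dx.
  have Dv : dom T (app T x) by apply/(Hd _).
  exact: (Hz _ Dv).
have Q : forall d, (d <= m)%N -> forall x, dom T x -> iter (m - d).+1 (app T) x = 0.
  elim=> [|d IH] Hdm x Dx.
    by rewrite subn0 -app_pow Hz.
  have Ek : (m - d = (m - d.+1).+1)%N by lia.
  have Dpx := proj2 (Hd x) Dx.
  have Dy := @dom_pow _ _ T _ _ Dpx (m - d.+1) ltac:(lia).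
  have DTy := @dom_pow _ _ T _ _ Dpx ((m - d.+1).+1) ltac:(lia).
  have TTy : app T (app T (iter (m - d.+1) (app T) x)) = 0.
    by have := IH ltac:(lia) x Dx; rewrite Ek.
  exact: (key IP L c Hc P _ Dy DTy TTy).
move=> x Dx.
by have := Q m (leqnn m) x Dx; rewrite subnn.
Qed.

Theorem theorem2p5 (R : realType) (V : lmodType R[i]) (ip : V -> V -> R[i])
  (HV : is_hilbert ip) (T : op V)
  (Tlin : is_linear_op T) (Tdense : densely_defined ip T)
  (Tclosed : closed_op ip T)
  (Tdom : forall x, dom T x -> dom (adjoint ip T) x)
  (Hpos : positive_op ip (re_part ip T) \/ positive_op ip (im_part ip T))
  (Hnil : exists n : nat,
      (forall x, dom (oppow T n) x <-> dom T x) /\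
      (forall x, dom T x -> app (oppow T n) x = 0)) :
  in_BH ip T /\ normal_op ip T /\ (forall x, dom T x /\ app T x = 0).
Proof.
case: HV => IP _.
have Z : forall x, dom T x -> app T x = 0.
  case: Hpos => Hp.
    exact: (zeroT IP Tlin 1 (or_introl erefl) (posA IP Tdom Hp) Hnil).
  exact: (zeroT IP Tlin (- 'i)%C (or_intror erefl) (posB IP Tdom Hp) Hnil).
have Dall : forall v, dom T v.
  move=> v.
  have pos n : 0 < ((n.+1)%:R : R)^-1 by rewrite invr_gt0 ltr0n.
  pose u n := proj1_sig (constructive_indefinite_description _ (Tdense v _ (pos n))).
  have Hu n : dom T (u n) /\ hnorm ip (v - u n) < ((n.+1)%:R)^-1
    := proj2_sig (constructive_indefinite_description _ (Tdense v _ (pos n))).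
  have C1 : hconverges ip u v.
    move=> e e0; exists (Num.trunc (e^-1)) => n Hn.
    rewrite -hnormN // opprB.
    apply: (lt_trans (Hu n).2).
    rewrite invf_plt ?posrE ?ltr0n //.
    apply: (lt_le_trans (truncnS_gt _)).
    by rewrite ler_nat ltnS.
  have C2 : hconverges ip (fun n => app T (u n)) 0.
    move=> e e0; exists 0%N => n _.
    by rewrite Z ?subr0 ?hnorm0 //; exact: (Hu n).1.
  by case: (Tclosed u v 0 (fun n => (Hu n).1) C1 C2).
have Adom : forall y, dom (adjoint ip T) y.
  move=> y; exists 0 => w Dw.
  by rewrite Z // (ip0l IP) (ip0r IP).
have Aapp : forall y, app (adjoint ip T) y = 0.
  move=> y.
  have As : adj_rel ip T y (app (adjoint ip T) y) :=
    epsilon_spec (inhabits 0) _ (Adom y).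
  case: (IP) => _ _ _ H4; apply: H4.
  by rewrite -As ?Z ?(ip0l IP).
split.
  split; first exact: Dall.
  by exists 0 => x; rewrite Z // (hnorm0 IP) mul0r.
split.
  split.
    by move=> x; split=> _; split.
  move=> x _; change (app T (app (adjoint ip T) x) = app (adjoint ip T) (app T x)).
  by rewrite !Aapp Z.
by move=> x; split; [exact: Dall | exact: Z].
Qed.
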